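(* Let $S$ be the set of all sequents and $M,\mathbb{B}_S,m$ as in the context. For each formula $A$ put $V(A):=(m(A\Rightarrow),\,M(\Rightarrow A))$. Then for every formula $A$, $m(A\Rightarrow)$ and $M(\Rightarrow A)$ belong to $\mathbb{B}_S$ and $m(A\Rightarrow)\subseteq M(\Rightarrow A)$, and $V$ is a semi ${\tt D}\mathbb{B}_S$-valuation.
   Context: ${\sf G}^{1}{\sf LC}^{cf}$ is the cut-free second-order sequent calculus (language without relation or function symbols; sequents $\Gamma\Rightarrow\Delta$ are pairs of finite sets of formulas; initial sequents $A,\Gamma\Rightarrow\Delta,A$ for atomic $A$; rules $(L\lnot)$ $\lnot F,\Gamma\Rightarrow\Delta,F$ / $\lnot F,\Gamma\Rightarrow\Delta$; $(R\lnot)$ $F,\Gamma\Rightarrow\Delta,\lnot F$ / $\Gamma\Rightarrow\Delta,\lnot F$; rules for $\lor,\land$ and first/second-order quantifiers in which the major formula is kept in the premise, with eigenvariables not in the conclusion for $(L\exists),(R\forall)$ and arbitrary terms $t$ / abstracts $T=\lambda\vec x.G$ as instances for $(R\exists),(L\forall)$). $Tm_0$, $Tm_1^{(n)}$: first-order terms and $n$-ary abstracts. For sequents, $M(\Gamma\Rightarrow\Delta):=\{(\Lambda\Rightarrow\Theta)\in S:{\sf G}^{1}{\sf LC}^{cf}\vdash\Gamma,\Lambda\Rightarrow\Delta,\Theta\}$; this $M:S\to\mathcal{P}(S)$ satisfies $x\in M(x)\iff M(x)=S$ and $x\in M(y)\iff y\in M(x)$. $\mathbb{B}_S:=\{\alpha\subseteq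 S:\alpha=\bigcap\{M(x):\alpha\subseteq M(x)\}\}$ (with $\bigcap\emptyset=S$), a complete Boolean algebra under inclusion with meets $\bigcap$, joins $\sup_\lambda\alpha_\lambda=\bigcap\{\gamma\in\mathbb{B}_S:\bigcup_\lambda\alpha_\lambda\subseteq\gamma\}$, and complement $-\alpha=\bigcap\{M(x):x\in\alpha\}$; $m(y):=\bigcap\{M(x):y\in M(x)\}$. For a cBa $\mathbb{B}$: ${\tt D}\mathbb{B}=\{(a,b):a\le b\}$, ${\tt a}=(\Box{\tt a},\Diamond{\tt a})$; ${\tt a}\unlhd{\tt b}$ iff $\Box{\tt a}\le\Box{\tt b}$ and $\Diamond{\tt a}\ge\Diamond{\tt b}$; $-{\tt a}=(-\Diamond{\tt a},-\Box{\tt a})$; $\sup_<,\inf_<$ componentwise. A semi ${\tt D}\mathbb{B}$-valuation is a map $V$ from formulas to ${\tt D}\mathbb{B}$ with $V(\lnot F)\unlhd-V(F)$, $V(F_0\lor F_1)\unlhd\sup_<\{V(F_0),V(F_1)\}$, $V(F_0\land F_1)\unlhd\inf_<\{V(F_0),V(F_1)\}$, $V(\exists xF(x))\unlhd\sup_<\{V(F(t)):t\in Tm_0\}$, $V(\forall xF(x))\unlhd\inf_<\{V(F(t)):t\in Tm_0\}$, $V(\exists X^nF(X))\unlhd\sup_<\{V(F(T)):T\in Tm_1^{(n)}\}$, $V(\forall X^nF(X))\unlhd\inf_<\{V(F(T)):T\in Tm_1^{(n)}\}$. *)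

(* Defs.v *)
From Stdlib Require Import List Arith Bool.
Import ListNotations.

(* first-order terms: free variables (names) and bound variables (de Bruijn) *)
Inductive term : Type :=
| TF (a : nat)
| TB (i : nat).

(* second-order variables: free X^n (name a, arity n) or bound (de Bruijn) *)
Inductive pvar : Type :=
| PF (a : nat) (n : nat)
| PB (i : nat).

Inductive form : Type :=
| Atom (P : pvar) (ts : list term)
| Neg (F : form)
| Or (F G : form)
| And (F G : form)
| Ex1 (F : form)
| All1 (F : form)
| Ex2 (n : nat) (F : form)           (* exists X^n F *)
| All2 (n : nat) (F : form).

(* well-formedness: k = number of enclosing first-order binders,
   ar = arities of enclosing second-order binders (innermost first) *)
Definition twf (k : nat) (t : term) : bool :=
  match t with TF _ => true | TB i => Nat.ltb i k end.

Fixpoint wf (k : nat) (ar : list nat) (F : form) : bool :=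
  match F with
  | Atom (PF _ n) ts => Nat.eqb (length ts) n && forallb (twf k) ts
  | Atom (PB i) ts => Nat.ltb i (length ar) && Nat.eqb (length ts) (nth i ar 0)
                      && forallb (twf k) ts
  | Neg G => wf k ar G
  | Or G H => wf k ar G && wf k ar H
  | And G H => wf k ar G && wf k ar H
  | Ex1 G => wf (S k) ar G
  | All1 G => wf (S k) ar G
  | Ex2 n G => wf k (n :: ar) G
  | All2 n G => wf k (n :: ar) G
  end.

Definition formula (F : form) : Prop := wf 0 [] F = true.

(* n-ary abstracts lambda x0..x_{n-1}. G : G with first-order indices 0..n-1
   as the lambda-bound variables (Tm_1^(n)) *)
Definition abstract (n : nat) (G : form) : Prop := wf n [] G = true.

Definition topen (k : nat) (u t : term) : term :=
  match t with TB i => if Nat.eqb i k then u else t | TF _ => t end.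

Fixpoint open1 (k : nat) (u : term) (F : form) : form :=
  match F with
  | Atom P ts => Atom P (map (topen k u) ts)
  | Neg G => Neg (open1 k u G)
  | Or G H => Or (open1 k u G) (open1 k u H)
  | And G H => And (open1 k u G) (open1 k u H)
  | Ex1 G => Ex1 (open1 (S k) u G)
  | All1 G => All1 (open1 (S k) u G)
  | Ex2 n G => Ex2 n (open1 k u G)
  | All2 n G => All2 n (open1 k u G)
  end.

(* instantiating an abstract with argument terms (beta reduction) *)
Definition tlift (d : nat) (t : term) : term :=
  match t with TB j => TB (j + d) | TF a => TF a end.

Definition tsub (d : nat) (ts : list term) (t : term) : term :=
  match t with
  | TF a => TF a
  | TB i => if Nat.ltb i d then TB i else tlift d (nth (i - d) ts (TB 0))
  end.

Fixpoint fsub (d : nat) (ts : list term) (G : form) : form :=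
  match G with
  | Atom P us => Atom P (map (tsub d ts) us)
  | Neg H => Neg (fsub d ts H)
  | Or H K => Or (fsub d ts H) (fsub d ts K)
  | And H K => And (fsub d ts H) (fsub d ts K)
  | Ex1 H => Ex1 (fsub (S d) ts H)
  | All1 H => All1 (fsub (S d) ts H)
  | Ex2 n H => Ex2 n (fsub d ts H)
  | All2 n H => All2 n (fsub d ts H)
  end.

Fixpoint open2 (k : nat) (T : form) (F : form) : form :=
  match F with
  | Atom (PB i) ts => if Nat.eqb i k then fsub 0 ts T else Atom (PB i) ts
  | Atom P ts => Atom P ts
  | Neg G => Neg (open2 k T G)
  | Or G H => Or (open2 k T G) (open2 k T H)
  | And G H => And (open2 k T G) (open2 k T H)
  | Ex1 G => Ex1 (open2 k T G)
  | All1 G => All1 (open2 k T G)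
  | Ex2 n G => Ex2 n (open2 (S k) T G)
  | All2 n G => All2 n (open2 (S k) T G)
  end.

Fixpoint open2v (k : nat) (a n : nat) (F : form) : form :=
  match F with
  | Atom (PB i) ts => if Nat.eqb i k then Atom (PF a n) ts else Atom (PB i) ts
  | Atom P ts => Atom P ts
  | Neg G => Neg (open2v k a n G)
  | Or G H => Or (open2v k a n G) (open2v k a n H)
  | And G H => And (open2v k a n G) (open2v k a n H)
  | Ex1 G => Ex1 (open2v k a n G)
  | All1 G => All1 (open2v k a n G)
  | Ex2 m G => Ex2 m (open2v (S k) a n G)
  | All2 m G => All2 m (open2v (S k) a n G)
  end.

Fixpoint occ1 (a : nat) (F : form) : bool :=
  match F with
  | Atom _ ts => existsb (fun t => match t with TF b => Nat.eqb a b | TB _ => false end) ts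
  | Neg G => occ1 a G
  | Or G H | And G H => occ1 a G || occ1 a H
  | Ex1 G | All1 G | Ex2 _ G | All2 _ G => occ1 a G
  end.

Fixpoint occ2 (a n : nat) (F : form) : bool :=
  match F with
  | Atom (PF b m) _ => Nat.eqb a b && Nat.eqb n m
  | Atom (PB _) _ => false
  | Neg G => occ2 a n G
  | Or G H | And G H => occ2 a n G || occ2 a n H
  | Ex1 G | All1 G | Ex2 _ G | All2 _ G => occ2 a n G
  end.

Definition isAtom (F : form) : Prop := exists P ts, F = Atom P ts.

Definition fresh1 (a : nat) (Gam Del : list form) : Prop :=
  forall A, In A (Gam ++ Del) -> occ1 a A = false.
Definition fresh2 (a n : nat) (Gam Del : list form) : Prop :=
  forall A, In A (Gam ++ Del) -> occ2 a n A = false.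

(* Sequents Gam => Del: pairs of finite sets, represented by lists read as
   sets (all rules are stated via membership, so provability only depends on
   the underlying sets).  Rules keep the major formula in the premise. *)
Inductive prov : list form -> list form -> Prop :=
| p_init A Gam Del : isAtom A -> In A Gam -> In A Del -> prov Gam Del
| p_negL F Gam Del : In (Neg F) Gam -> prov Gam (F :: Del) -> prov Gam Del
| p_negR F Gam Del : In (Neg F) Del -> prov (F :: Gam) Del -> prov Gam Del
| p_orL F0 F1 Gam Del : In (Or F0 F1) Gam ->
    prov (F0 :: Gam) Del -> prov (F1 :: Gam) Del -> prov Gam Del
| p_orR0 F0 F1 Gam Del : In (Or F0 F1) Del -> prov Gam (F0 :: Del) -> prov Gam Del
| p_orR1 F0 F1 Gam Del : In (Or F0 F1) Del -> prov Gam (F1 :: Del) -> prov Gam Del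
| p_andL0 F0 F1 Gam Del : In (And F0 F1) Gam -> prov (F0 :: Gam) Del -> prov Gam Del
| p_andL1 F0 F1 Gam Del : In (And F0 F1) Gam -> prov (F1 :: Gam) Del -> prov Gam Del
| p_andR F0 F1 Gam Del : In (And F0 F1) Del ->
    prov Gam (F0 :: Del) -> prov Gam (F1 :: Del) -> prov Gam Del
| p_ex1L F a Gam Del : In (Ex1 F) Gam -> fresh1 a Gam Del ->
    prov (open1 0 (TF a) F :: Gam) Del -> prov Gam Del
| p_ex1R F a Gam Del : In (Ex1 F) Del ->
    prov Gam (open1 0 (TF a) F :: Del) -> prov Gam Del
| p_all1L F a Gam Del : In (All1 F) Gam ->
    prov (open1 0 (TF a) F :: Gam) Del -> prov Gam Del
| p_all1R F a Gam Del : In (All1 F) Del -> fresh1 a Gam Del ->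
    prov Gam (open1 0 (TF a) F :: Del) -> prov Gam Del
| p_ex2L n F a Gam Del : In (Ex2 n F) Gam -> fresh2 a n Gam Del ->
    prov (open2v 0 a n F :: Gam) Del -> prov Gam Del
| p_ex2R n F T Gam Del : In (Ex2 n F) Del -> abstract n T ->
    prov Gam (open2 0 T F :: Del) -> prov Gam Del
| p_all2L n F T Gam Del : In (All2 n F) Gam -> abstract n T ->
    prov (open2 0 T F :: Gam) Del -> prov Gam Del
| p_all2R n F a Gam Del : In (All2 n F) Del -> fresh2 a n Gam Del ->
    prov Gam (open2v 0 a n F :: Del) -> prov Gam Del.

Definition sequent : Type := (list form * list form)%type.
Definition inS (x : sequent) : Prop :=
  Forall formula (fst x) /\ Forall formula (snd x).

(* subsets of S are predicates on sequents (contained in inS) *)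
Definition sset : Type := sequent -> Prop.
Definition subset (a b : sset) : Prop := forall y, a y -> b y.

Definition M (x : sequent) : sset :=
  fun y => inS y /\ prov (fst x ++ fst y) (snd x ++ snd y).

(* B_S = { alpha subset S : alpha = /\ { M(x) : x in S, alpha subset M(x) } } *)
Definition inB (al : sset) : Prop :=
  subset al inS /\
  forall y, al y <-> (inS y /\ forall x, inS x -> subset al (M x) -> M x y).

Definition m (y : sequent) : sset :=
  fun z => inS z /\ forall x, inS x -> M x y -> M x z.

Definition Binf {I : Type} (f : I -> sset) : sset :=
  fun y => inS y /\ forall i, f i y.
Definition Bsup {I : Type} (f : I -> sset) : sset :=
  fun y => inS y /\
    forall g, inB g -> (forall i, subset (f i) g) -> g y.
Definition Bcompl (al : sset) : sset :=
  fun y => inS y /\ forall x, inS x -> al x -> M x y.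

(* D B_S: pairs (Box a, Diamond a) with Box a <= Diamond a *)
Definition inDB (a : sset * sset) : Prop :=
  inB (fst a) /\ inB (snd a) /\ subset (fst a) (snd a).
Definition leD (a b : sset * sset) : Prop :=
  subset (fst a) (fst b) /\ subset (snd b) (snd a).
Definition negD (a : sset * sset) : sset * sset :=
  (Bcompl (snd a), Bcompl (fst a)).
Definition supD {I : Type} (f : I -> sset * sset) : sset * sset :=
  (Bsup (fun i => fst (f i)), Bsup (fun i => snd (f i))).
Definition infD {I : Type} (f : I -> sset * sset) : sset * sset :=
  (Binf (fun i => fst (f i)), Binf (fun i => snd (f i))).

Definition pair2 {X : Type} (u v : X) : bool -> X := fun b => if b then u else v.

Definition semi_valuation (V : form -> sset * sset) : Prop :=
  (forall A, formula A -> inDB (V A)) /\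
  (forall F, formula (Neg F) -> leD (V (Neg F)) (negD (V F))) /\
  (forall F0 F1, formula (Or F0 F1) ->
     leD (V (Or F0 F1)) (supD (pair2 (V F0) (V F1)))) /\
  (forall F0 F1, formula (And F0 F1) ->
     leD (V (And F0 F1)) (infD (pair2 (V F0) (V F1)))) /\
  (forall F, formula (Ex1 F) ->
     leD (V (Ex1 F)) (supD (fun a : nat => V (open1 0 (TF a) F)))) /\
  (forall F, formula (All1 F) ->
     leD (V (All1 F)) (infD (fun a : nat => V (open1 0 (TF a) F)))) /\
  (forall n F, formula (Ex2 n F) ->
     leD (V (Ex2 n F))
         (supD (fun T : {G : form | abstract n G} => V (open2 0 (proj1_sig T) F)))) /\
  (forall n F, formula (All2 n F) ->
     leD (V (All2 n F))
         (infD (fun T : {G : form | abstract n G} => V (open2 0 (proj1_sig T) F)))).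

Definition Vcan (A : form) : sset * sset := (m ([A], []), M ([], [A])).

(* Main.v *)
Require Import Defs.
From Stdlib Require Import List Arith Bool Lia.
Import ListNotations.

Definition rent (s1 : nat -> nat) (t : term) : term :=
  match t with TF a => TF (s1 a) | TB i => TB i end.

Fixpoint renf (s1 : nat -> nat) (s2 : nat -> nat -> nat) (F : form) : form :=
  match F with
  | Atom (PF a n) ts => Atom (PF (s2 a n) n) (map (rent s1) ts)
  | Atom (PB i) ts => Atom (PB i) (map (rent s1) ts)
  | Neg G => Neg (renf s1 s2 G)
  | Or G H => Or (renf s1 s2 G) (renf s1 s2 H)
  | And G H => And (renf s1 s2 G) (renf s1 s2 H)
  | Ex1 G => Ex1 (renf s1 s2 G)
  | All1 G => All1 (renf s1 s2 G)
  | Ex2 n G => Ex2 n (renf s1 s2 G)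
  | All2 n G => All2 n (renf s1 s2 G)
  end.

Lemma renf_open1 s1 s2 F : forall k a,
  renf s1 s2 (open1 k (TF a) F) = open1 k (TF (s1 a)) (renf s1 s2 F).
Proof.
  induction F; intros; simpl; try (rewrite ?IHF, ?IHF1, ?IHF2; reflexivity).
  destruct P; simpl; rewrite !map_map; f_equal; apply map_ext;
    intros [b|j]; simpl; try reflexivity; destruct (Nat.eqb j k); reflexivity.
Qed.

Lemma renf_open2v s1 s2 F : forall k a n,
  renf s1 s2 (open2v k a n F) = open2v k (s2 a n) n (renf s1 s2 F).
Proof.
  induction F; intros; simpl; try (rewrite ?IHF, ?IHF1, ?IHF2; reflexivity).
  destruct P; simpl. reflexivity. destruct (Nat.eqb i k); reflexivity.
Qed.

Lemma rent_tsub s1 d ts t :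
  rent s1 (tsub d ts t) = tsub d (map (rent s1) ts) (rent s1 t).
Proof.
  destruct t as [a|i]; simpl. reflexivity.
  destruct (Nat.ltb i d). reflexivity.
  replace (nth (i - d) (map (rent s1) ts) (TB 0)) with (rent s1 (nth (i-d) ts (TB 0)))
    by (rewrite <- (map_nth (rent s1) ts (TB 0)); reflexivity).
  destruct (nth (i - d) ts (TB 0)); reflexivity.
Qed.

Lemma renf_fsub s1 s2 T : forall d ts,
  renf s1 s2 (fsub d ts T) = fsub d (map (rent s1) ts) (renf s1 s2 T).
Proof.
  induction T; intros; simpl; try (rewrite ?IHT, ?IHT1, ?IHT2; reflexivity).
  destruct P; simpl; rewrite !map_map; f_equal; apply map_ext; intros; apply rent_tsub.
Qed.

Lemma renf_open2 s1 s2 F : forall k T,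
  renf s1 s2 (open2 k T F) = open2 k (renf s1 s2 T) (renf s1 s2 F).
Proof.
  induction F; intros; simpl; try (rewrite ?IHF, ?IHF1, ?IHF2; reflexivity).
  destruct P; simpl. reflexivity. destruct (Nat.eqb i k). apply renf_fsub. reflexivity.
Qed.

Lemma forallb_rent k s1 ts : forallb (twf k) (map (rent s1) ts) = forallb (twf k) ts.
Proof. induction ts as [|[]]; simpl; rewrite ?IHts; auto. Qed.

Lemma wf_renf s1 s2 F : forall k ar, wf k ar (renf s1 s2 F) = wf k ar F.
Proof.
  induction F; intros; simpl; rewrite ?IHF, ?IHF1, ?IHF2; auto.
  destruct P; simpl; rewrite length_map, forallb_rent; reflexivity.
Qed.

Definition upd1 (s1 : nat -> nat) a b := fun x => if Nat.eqb x a then b else s1 x.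
Definition upd2 (s2 : nat -> nat -> nat) a n b :=
  fun x m => if Nat.eqb x a && Nat.eqb m n then b else s2 x m.

Lemma map_rent_upd1 s1 a b ts :
  existsb (fun t => match t with TF c => Nat.eqb a c | TB _ => false end) ts = false ->
  map (rent (upd1 s1 a b)) ts = map (rent s1) ts.
Proof.
  induction ts as [|t ts IH]; simpl; auto. intros H.
  apply orb_false_iff in H as [H1 H2]. rewrite IH; auto. f_equal.
  destruct t; simpl; auto. unfold upd1. rewrite Nat.eqb_sym, H1. reflexivity.
Qed.

Lemma renf_upd1 s1 s2 a b F : occ1 a F = false ->
  renf (upd1 s1 a b) s2 F = renf s1 s2 F.
Proof.
  induction F; simpl; intros H; try (apply orb_false_iff in H as [? ?]);
    rewrite ?IHF, ?IHF1, ?IHF2; auto.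
  destruct P; rewrite map_rent_upd1; auto.
Qed.

Lemma renf_upd2 s1 s2 a n b F : occ2 a n F = false ->
  renf s1 (upd2 s2 a n b) F = renf s1 s2 F.
Proof.
  induction F; simpl; intros H; try (apply orb_false_iff in H as [? ?]);
    rewrite ?IHF, ?IHF1, ?IHF2; auto.
  destruct P; auto. unfold upd2. rewrite (Nat.eqb_sym a0 a), (Nat.eqb_sym n0 n), H. reflexivity.
Qed.

Definition tv (t : term) : nat := match t with TF b => b | TB _ => 0 end.
Fixpoint mx1 F := match F with
 | Atom _ ts => list_max (map tv ts)
 | Neg G => mx1 G
 | Or G H | And G H => max (mx1 G) (mx1 H)
 | Ex1 G | All1 G | Ex2 _ G | All2 _ G => mx1 G end.
Fixpoint mx2 F := match F with
 | Atom (PF b _) _ => b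
 | Atom (PB _) _ => 0
 | Neg G => mx2 G
 | Or G H | And G H => max (mx2 G) (mx2 H)
 | Ex1 G | All1 G | Ex2 _ G | All2 _ G => mx2 G end.

Lemma in_le_list_max x l : In x l -> x <= list_max l.
Proof.
  intros H. pose proof (proj1 (list_max_le l (list_max l)) (le_n _)) as F.
  rewrite Forall_forall in F. auto.
Qed.

Lemma occ1_le a F : occ1 a F = true -> a <= mx1 F.
Proof.
  induction F; simpl; intros H; try (apply orb_true_iff in H as [H|H]; [apply IHF1 in H | apply IHF2 in H]; lia); auto.
  apply existsb_exists in H as [[b|j] [Hin Hb]]; [|discriminate].
  apply Nat.eqb_eq in Hb; subst. apply in_le_list_max. apply (in_map tv _ _ Hin).
Qed.

Lemma occ2_le a n F : occ2 a n F = true -> a <= mx2 F.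
Proof.
  induction F; simpl; intros H; try (apply orb_true_iff in H as [H|H]; [apply IHF1 in H | apply IHF2 in H]; lia); auto.
  destruct P; [|discriminate]. apply andb_true_iff in H as [H _]. apply Nat.eqb_eq in H; lia.
Qed.

Lemma fresh1_exists G D : exists a, fresh1 a G D.
Proof.
  exists (S (list_max (map mx1 (G ++ D)))). intros A HA.
  destruct (occ1 _ A) eqn:E; auto. apply occ1_le in E.
  pose proof (in_le_list_max _ _ (in_map mx1 _ _ HA)). lia.
Qed.

Lemma fresh2_exists n G D : exists a, fresh2 a n G D.
Proof.
  exists (S (list_max (map mx2 (G ++ D)))). intros A HA.
  destruct (occ2 _ _ A) eqn:E; auto. apply occ2_le in E.
  pose proof (in_le_list_max _ _ (in_map mx2 _ _ HA)). lia.
Qed.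

Ltac solve_incl := let a := fresh in let h := fresh in
  intros a h; simpl in *; repeat rewrite in_app_iff in *; simpl in *; tauto.

Lemma incl_cc {A} (x : A) l l' : incl l l' -> incl (x :: l) (x :: l').
Proof. intros H. apply incl_cons. left; auto. apply incl_tl; auto. Qed.

Lemma fresh1_split a G D : fresh1 a G D ->
  (forall A, In A G -> occ1 a A = false) /\ (forall A, In A D -> occ1 a A = false).
Proof. intros H; split; intros; apply H; apply in_or_app; auto. Qed.
Lemma fresh2_split a n G D : fresh2 a n G D ->
  (forall A, In A G -> occ2 a n A = false) /\ (forall A, In A D -> occ2 a n A = false).
Proof. intros H; split; intros; apply H; apply in_or_app; auto. Qed.

Lemma map_upd1 s1 s2 a b L : (forall A, In A L -> occ1 a A = false) ->
  map (renf (upd1 s1 a b) s2) L = map (renf s1 s2) L.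
Proof. intros H; apply map_ext_in; intros; apply renf_upd1; auto. Qed.
Lemma map_upd2 s1 s2 a n b L : (forall A, In A L -> occ2 a n A = false) ->
  map (renf s1 (upd2 s2 a n b)) L = map (renf s1 s2) L.
Proof. intros H; apply map_ext_in; intros; apply renf_upd2; auto. Qed.

Lemma abstract_renf s1 s2 n T : abstract n T -> abstract n (renf s1 s2 T).
Proof. unfold abstract; rewrite wf_renf; auto. Qed.

Lemma prov_ren G D : prov G D -> forall s1 s2 G' D',
  incl (map (renf s1 s2) G) G' -> incl (map (renf s1 s2) D) D' -> prov G' D'.
Proof.
  induction 1; intros s1 s2 G' D' HG HD.
  - apply p_init with (renf s1 s2 A).
    + destruct H as [P [ts ->]]; destruct P; simpl; eexists; eexists; reflexivity.
    + apply HG, in_map; auto.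
    + apply HD, in_map; auto.
  - apply p_negL with (renf s1 s2 F). exact (HG _ (in_map _ _ _ H)).
    apply (IHprov s1 s2); auto. apply incl_cc; auto.
  - apply p_negR with (renf s1 s2 F). exact (HD _ (in_map _ _ _ H)).
    apply (IHprov s1 s2); auto. apply incl_cc; auto.
  - apply p_orL with (renf s1 s2 F0) (renf s1 s2 F1). exact (HG _ (in_map _ _ _ H)).
    apply (IHprov1 s1 s2); auto. apply incl_cc; auto.
    apply (IHprov2 s1 s2); auto. apply incl_cc; auto.
  - apply p_orR0 with (renf s1 s2 F0) (renf s1 s2 F1). exact (HD _ (in_map _ _ _ H)).
    apply (IHprov s1 s2); auto. apply incl_cc; auto.
  - apply p_orR1 with (renf s1 s2 F0) (renf s1 s2 F1). exact (HD _ (in_map _ _ _ H)).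
    apply (IHprov s1 s2); auto. apply incl_cc; auto.
  - apply p_andL0 with (renf s1 s2 F0) (renf s1 s2 F1). exact (HG _ (in_map _ _ _ H)).
    apply (IHprov s1 s2); auto. apply incl_cc; auto.
  - apply p_andL1 with (renf s1 s2 F0) (renf s1 s2 F1). exact (HG _ (in_map _ _ _ H)).
    apply (IHprov s1 s2); auto. apply incl_cc; auto.
  - apply p_andR with (renf s1 s2 F0) (renf s1 s2 F1). exact (HD _ (in_map _ _ _ H)).
    apply (IHprov1 s1 s2); auto. apply incl_cc; auto.
    apply (IHprov2 s1 s2); auto. apply incl_cc; auto.
  -
    destruct (fresh1_exists G' D') as [b Hb].
    destruct (fresh1_split _ _ _ H0) as [HfG HfD].
    apply p_ex1L with (renf s1 s2 F) b; auto. exact (HG _ (in_map _ _ _ H)).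
    apply (IHprov (upd1 s1 a b) s2).
    + simpl. rewrite renf_open1, map_upd1, renf_upd1 by (auto; exact (HfG _ H)).
      unfold upd1 at 1. rewrite Nat.eqb_refl. apply incl_cc; auto.
    + rewrite map_upd1; auto.
  - apply p_ex1R with (renf s1 s2 F) (s1 a). exact (HD _ (in_map _ _ _ H)).
    apply (IHprov s1 s2); auto. simpl; rewrite renf_open1. apply incl_cc; auto.
  - apply p_all1L with (renf s1 s2 F) (s1 a). exact (HG _ (in_map _ _ _ H)).
    apply (IHprov s1 s2); auto. simpl; rewrite renf_open1. apply incl_cc; auto.
  -
    destruct (fresh1_exists G' D') as [b Hb].
    destruct (fresh1_split _ _ _ H0) as [HfG HfD].
    apply p_all1R with (renf s1 s2 F) b; auto. exact (HD _ (in_map _ _ _ H)).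
    apply (IHprov (upd1 s1 a b) s2).
    + rewrite map_upd1; auto.
    + simpl. rewrite renf_open1, map_upd1, renf_upd1 by (auto; exact (HfD _ H)).
      unfold upd1 at 1. rewrite Nat.eqb_refl. apply incl_cc; auto.
  -
    destruct (fresh2_exists n G' D') as [b Hb].
    destruct (fresh2_split _ _ _ _ H0) as [HfG HfD].
    apply p_ex2L with n (renf s1 s2 F) b; auto. exact (HG _ (in_map _ _ _ H)).
    apply (IHprov s1 (upd2 s2 a n b)).
    + simpl. rewrite renf_open2v, map_upd2, renf_upd2 by (auto; exact (HfG _ H)).
      unfold upd2 at 1. rewrite !Nat.eqb_refl. apply incl_cc; auto.
    + rewrite map_upd2; auto.
  - apply p_ex2R with n (renf s1 s2 F) (renf s1 s2 T). exact (HD _ (in_map _ _ _ H)).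
    apply abstract_renf; auto.
    apply (IHprov s1 s2); auto. simpl; rewrite renf_open2. apply incl_cc; auto.
  - apply p_all2L with n (renf s1 s2 F) (renf s1 s2 T). exact (HG _ (in_map _ _ _ H)).
    apply abstract_renf; auto.
    apply (IHprov s1 s2); auto. simpl; rewrite renf_open2. apply incl_cc; auto.
  -
    destruct (fresh2_exists n G' D') as [b Hb].
    destruct (fresh2_split _ _ _ _ H0) as [HfG HfD].
    apply p_all2R with n (renf s1 s2 F) b; auto. exact (HD _ (in_map _ _ _ H)).
    apply (IHprov s1 (upd2 s2 a n b)).
    + rewrite map_upd2; auto.
    + simpl. rewrite renf_open2v, map_upd2, renf_upd2 by (auto; exact (HfD _ H)).
      unfold upd2 at 1. rewrite !Nat.eqb_refl. apply incl_cc; auto.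
Qed.

Lemma renf_id F : renf (fun x => x) (fun a _ => a) F = F.
Proof.
  induction F; simpl; rewrite ?IHF, ?IHF1, ?IHF2; auto.
  assert (map (rent (fun x => x)) ts = ts) as E
    by (induction ts as [|[] ts IH]; simpl; rewrite ?IH; auto).
  destruct P; rewrite E; auto.
Qed.

Lemma weak G D G' D' : prov G D -> incl G G' -> incl D D' -> prov G' D'.
Proof.
  intros H HG HD. apply (prov_ren _ _ H (fun x => x) (fun a _ => a));
  rewrite (map_ext _ (fun x => x) renf_id), map_id; auto.
Qed.

Fixpoint sz F := match F with
 | Atom _ _ => 0 | Neg G => S (sz G)
 | Or G H | And G H => S (sz G + sz H)
 | Ex1 G | All1 G | Ex2 _ G | All2 _ G => S (sz G) end.

Lemma sz_open1 F : forall k u, sz (open1 k u F) = sz F.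
Proof. induction F; intros; simpl; rewrite ?IHF, ?IHF1, ?IHF2; auto. Qed.
Lemma sz_open2v F : forall k a n, sz (open2v k a n F) = sz F.
Proof.
  induction F; intros; simpl; rewrite ?IHF, ?IHF1, ?IHF2; auto.
  destruct P; simpl; auto. destruct (Nat.eqb i k); auto.
Qed.

Fixpoint ok (ar : list nat) F : Prop := match F with
 | Atom (PB i) ts => length ts = nth i ar 0
 | Atom _ _ => True
 | Neg G => ok ar G
 | Or G H | And G H => ok ar G /\ ok ar H
 | Ex1 G | All1 G => ok ar G
 | Ex2 n G | All2 n G => ok (n :: ar) G end.

Lemma ok_open1 F : forall ar k u, ok ar F -> ok ar (open1 k u F).
Proof.
  induction F; intros; simpl in *; try (split; try tauto; apply IHF1 || apply IHF2; tauto); auto.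
  destruct P; simpl; auto. rewrite length_map; auto.
Qed.
Lemma ok_open2v F : forall ar k a n, ok ar F -> ok ar (open2v k a n F).
Proof.
  induction F; intros; simpl in *; try (split; try tauto; apply IHF1 || apply IHF2; tauto); auto.
  destruct P; simpl; auto. destruct (Nat.eqb i k); simpl; auto.
Qed.
Lemma wf_ok F : forall k ar, wf k ar F = true -> ok ar F.
Proof.
  induction F; intros; simpl in *;
    repeat match goal with H : _ && _ = true |- _ => apply andb_prop in H as [? ?] end;
    eauto.
  destruct P; auto. repeat match goal with H : _ && _ = true |- _ => apply andb_prop in H as [? ?] end.
  apply Nat.eqb_eq; auto.
Qed.

Definition Tv a n := Atom (PF a n) (map TB (seq 0 n)).

Lemma abstract_Tv a n : abstract n (Tv a n).
Proof.
  unfold abstract, Tv; simpl. rewrite length_map, length_seq, Nat.eqb_refl; simpl.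
  apply forallb_forall; intros x Hx. apply in_map_iff in Hx as [i [<- Hi]].
  apply in_seq in Hi. simpl. apply Nat.ltb_lt; lia.
Qed.

Lemma map_nth_seq0 {A} (l : list A) d : map (fun i => nth i l d) (seq 0 (length l)) = l.
Proof.
  induction l; simpl; auto. f_equal. rewrite <- seq_shift, map_map. simpl. exact IHl.
Qed.

Lemma open2_Tv a n F : forall ar d, ok ar F -> nth d ar 0 = n ->
  open2 d (Tv a n) F = open2v d a n F.
Proof.
  induction F; intros ar d Hok Hn; simpl in *;
    try (destruct Hok; rewrite (IHF1 ar d), (IHF2 ar d); auto; fail);
    try (rewrite (IHF ar d); auto; fail);
    try (rewrite (IHF (n0 :: ar) (S d)); auto; fail).
  destruct P; auto. destruct (Nat.eqb i d) eqn:E; auto.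
  apply Nat.eqb_eq in E; subst. unfold Tv; simpl. f_equal.
  rewrite map_map. rewrite <- Hok. rewrite <- (map_nth_seq0 ts (TB 0)) at 2.
  apply map_ext; intros i; simpl. rewrite Nat.sub_0_r.
  destruct (nth i ts (TB 0)); simpl; rewrite ?Nat.add_0_r; auto.
Qed.

Lemma ident : forall s A ar, sz A <= s -> ok ar A ->
  forall G D, In A G -> In A D -> prov G D.
Proof.
  induction s as [|s IH]; intros A ar Hs Hok G D HG HD.
  - destruct A; simpl in Hs; try lia. eapply p_init; eauto. exists P, ts; reflexivity.
  - destruct A as [P ts|F|F0 F1|F0 F1|F|F|n F|n F]; simpl in Hs, Hok.
    + eapply p_init; eauto. exists P, ts; reflexivity.
    + apply p_negL with F; auto. apply p_negR with F. right; auto.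
      apply (IH F ar); [lia|auto|left;auto|left;auto].
    + destruct Hok. apply p_orL with F0 F1; auto.
      * apply p_orR0 with F0 F1; auto. apply (IH F0 ar); [lia|auto|left;auto|left;auto].
      * apply p_orR1 with F0 F1; auto. apply (IH F1 ar); [lia|auto|left;auto|left;auto].
    + destruct Hok. apply p_andR with F0 F1; auto.
      * apply p_andL0 with F0 F1; auto. apply (IH F0 ar); [lia|auto|left;auto|left;auto].
      * apply p_andL1 with F0 F1; auto. apply (IH F1 ar); [lia|auto|left;auto|left;auto].
    + destruct (fresh1_exists G D) as [a Ha]. apply p_ex1L with F a; auto.
      apply p_ex1R with F a; auto.
      apply (IH (open1 0 (TF a) F) ar); [rewrite sz_open1; lia|apply ok_open1; auto|left;auto|left;auto].
    + destruct (fresh1_exists G D) as [a Ha]. apply p_all1R with F a; auto.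
      apply p_all1L with F a; auto.
      apply (IH (open1 0 (TF a) F) ar); [rewrite sz_open1; lia|apply ok_open1; auto|left;auto|left;auto].
    + destruct (fresh2_exists n G D) as [a Ha]. apply p_ex2L with n F a; auto.
      apply p_ex2R with n F (Tv a n); auto. apply abstract_Tv.
      rewrite (open2_Tv a n F (n :: ar) 0); auto.
      apply (IH (open2v 0 a n F) (n :: ar)); [rewrite sz_open2v; lia|apply ok_open2v; auto|left;auto|left;auto].
    + destruct (fresh2_exists n G D) as [a Ha]. apply p_all2R with n F a; auto.
      apply p_all2L with n F (Tv a n); auto. apply abstract_Tv.
      rewrite (open2_Tv a n F (n :: ar) 0); auto.
      apply (IH (open2v 0 a n F) (n :: ar)); [rewrite sz_open2v; lia|apply ok_open2v; auto|left;auto|left;auto].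
Qed.

Lemma prov_id A : formula A -> forall G D, In A G -> In A D -> prov G D.
Proof. intros H; apply (ident (sz A) A []); auto. eapply wf_ok; exact H. Qed.

Lemma wf_open1 F : forall k ar a, wf (S k) ar F = true -> wf k ar (open1 k (TF a) F) = true.
Proof.
  induction F; intros k ar a H; simpl in *;
    repeat match goal with H : _ && _ = true |- _ => apply andb_prop in H as [? ?] end;
    rewrite ?IHF, ?IHF1, ?IHF2; auto.
  assert (forall ts, forallb (twf (S k)) ts = true -> forallb (twf k) (map (topen k (TF a)) ts) = true) as L.
  { induction ts0 as [|t ts0 IH]; simpl; auto. intros Ht; apply andb_prop in Ht as [Ht1 Ht2].
    rewrite IH; auto. destruct t; simpl; auto. destruct (Nat.eqb i k) eqn:E; simpl; auto.
    apply Nat.eqb_neq in E. simpl in Ht1; apply Nat.ltb_lt in Ht1. rewrite andb_true_r; apply Nat.ltb_lt; lia. }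
  destruct P; repeat match goal with H : _ && _ = true |- _ => apply andb_prop in H as [? ?] end;
    rewrite ?length_map, ?L; rewrite ?andb_true_iff; auto.
Qed.

Lemma wf_mono F : forall k ar e, wf k ar F = true -> wf k (ar ++ e) F = true.
Proof.
  induction F; intros k ar e H; simpl in *;
    repeat match goal with H : _ && _ = true |- _ => apply andb_prop in H as [? ?] end;
    rewrite ?IHF, ?IHF1, ?IHF2; auto;
    try (apply (IHF k (n :: ar)); auto; fail).
  destruct P; auto.
  repeat match goal with H : _ && _ = true |- _ => apply andb_prop in H as [? ?] end.
  apply Nat.ltb_lt in H. rewrite app_nth1 by auto. rewrite length_app.
  rewrite H1, H0, andb_true_r, andb_true_r. apply Nat.ltb_lt; lia.
Qed.

Lemma wf_fsub k n ts T : forall d ar, wf (d + n) ar T = true -> length ts = n ->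
  forallb (twf k) ts = true -> wf (d + k) ar (fsub d ts T) = true.
Proof.
  induction T; intros d ar H Hl Hts; simpl in *;
    repeat match goal with H : _ && _ = true |- _ => apply andb_prop in H as [? ?] end;
    try (rewrite ?IHT1, ?IHT2; auto; fail);
    try (apply (IHT (S d)); auto; fail);
    try (apply IHT; auto; fail).
  assert (forall us, forallb (twf (d + n)) us = true -> forallb (twf (d + k)) (map (tsub d ts) us) = true) as L.
  { induction us as [|t us IH]; simpl; auto. intros Ht; apply andb_prop in Ht as [Ht1 Ht2].
    rewrite IH; auto. rewrite andb_true_r. destruct t; simpl; auto.
    destruct (Nat.ltb i d) eqn:E; simpl. apply Nat.ltb_lt in E; apply Nat.ltb_lt; lia.
    apply Nat.ltb_ge in E. simpl in Ht1; apply Nat.ltb_lt in Ht1.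
    assert (In (nth (i - d) ts (TB 0)) ts) as Hin by (apply nth_In; lia).
    rewrite forallb_forall in Hts. specialize (Hts _ Hin).
    destruct (nth (i - d) ts (TB 0)); simpl in *; auto.
    apply Nat.ltb_lt in Hts; apply Nat.ltb_lt; lia. }
  destruct P; repeat match goal with H : _ && _ = true |- _ => apply andb_prop in H as [? ?] end;
    rewrite ?length_map, ?L; rewrite ?andb_true_iff; auto.
Qed.

Lemma wf_open2 n T F : abstract n T -> forall k ar d, wf k ar F = true -> length ar = S d ->
  nth d ar 0 = n -> wf k (firstn d ar) (open2 d T F) = true.
Proof.
  intros HT. induction F; intros k ar d H Hl Hn; simpl in *;
    repeat match goal with H : _ && _ = true |- _ => apply andb_prop in H as [? ?] end;
    try (rewrite ?IHF1, ?IHF2; auto; fail);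
    try (apply IHF; auto; fail);
    try (apply (IHF k (n0 :: ar) (S d)); simpl; auto; fail).
  destruct P; auto.
  repeat match goal with H : _ && _ = true |- _ => apply andb_prop in H as [? ?] end.
  destruct (Nat.eqb i d) eqn:E.
  - apply Nat.eqb_eq in E; subst i.
    apply (wf_mono _ _ [] (firstn d ar)).
    apply (wf_fsub k n ts T 0 []); auto. apply Nat.eqb_eq in H1. rewrite H1; auto.
  - simpl. apply Nat.eqb_neq in E. apply Nat.ltb_lt in H.
    rewrite length_firstn, nth_firstn.
    assert (i <? d = true) as E2 by (apply Nat.ltb_lt; lia). rewrite E2, H1, H0.
    rewrite andb_true_r, andb_true_r. apply Nat.ltb_lt; lia.
Qed.

Lemma formula_open1 F a : formula (Ex1 F) \/ formula (All1 F) -> formula (open1 0 (TF a) F).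
Proof. intros [H|H]; apply wf_open1; exact H. Qed.

Lemma formula_open2 n F T : formula (Ex2 n F) \/ formula (All2 n F) -> abstract n T ->
  formula (open2 0 T F).
Proof. intros [H|H] HT; apply (wf_open2 n T F HT 0 [n] 0); auto. Qed.

Lemma formula_ok n F : formula (Ex2 n F) \/ formula (All2 n F) -> ok [n] F.
Proof. intros [H|H]; apply (wf_ok F 0); exact H. Qed.

Lemma inS_l A : formula A -> inS ([A], []).
Proof. split; simpl; constructor; auto. Qed.
Lemma inS_r A : formula A -> inS ([], [A]).
Proof. split; simpl; constructor; auto. Qed.

Lemma inB_M x : inS x -> inB (M x).
Proof.
  intros Hx. split. intros y [Hy _]; exact Hy. intros y; split.
  - intros Hy. split. destruct Hy; auto. intros x' Hx' Hsub. apply Hsub; auto.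
  - intros [Hy H]. apply H; auto. intros z Hz; exact Hz.
Qed.

Lemma m_self y : inS y -> m y y.
Proof. split; auto. Qed.

Lemma inB_m y : inS y -> inB (m y).
Proof.
  intros Hy. split. intros z [Hz _]; auto. intros z; split.
  - intros Hz. split. apply Hz. intros x Hx Hsub. apply Hz; auto. apply Hsub. apply m_self; auto.
  - intros [Hz H]. split; auto. intros x Hx Hxy. apply H; auto. intros w [Hw Hw']. apply Hw'; auto.
Qed.

Lemma part1 A : formula A ->
  inB (m ([A], [])) /\ inB (M ([], [A])) /\ subset (m ([A], [])) (M ([], [A])).
Proof.
  intros HA. split; [apply inB_m, inS_l; auto|]. split; [apply inB_M, inS_r; auto|].
  intros z [Hz H]. apply H. apply inS_r; auto. split. apply inS_l; auto. simpl.
  apply (prov_id A); auto; left; auto.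
Qed.

Ltac inapp := apply in_or_app; right; left; reflexivity.

Theorem mainTheorem12 :
  (forall A : form, formula A ->
     inB (m ([A], [])) /\ inB (M ([], [A])) /\ subset (m ([A], [])) (M ([], [A])))
  /\ semi_valuation Vcan.
Proof.
  split; [exact part1|].
  unfold semi_valuation, leD, negD, supD, infD, Vcan, pair2; simpl.
  split; [intros A HA; apply part1; auto|].
  split.
  {
    intros F HF. assert (formula F) as HF' by exact HF. split.
    - intros z [Hz H]. split; auto. intros [x1 x2] Hx [_ Hxp]. simpl in Hxp.
      apply H; auto. split. apply inS_l; auto. simpl.
      apply p_negL with F. inapp. eapply weak; [exact Hxp| solve_incl | solve_incl].
    - intros y [Hy H]. split; auto. simpl.
      destruct (H ([F], []) (inS_l _ HF') (m_self _ (inS_l _ HF'))) as [_ Hp]. simpl in Hp.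
      apply p_negR with F; [left; auto|]. eapply weak; [exact Hp|solve_incl|solve_incl]. }
  split.
  {
    intros F0 F1 HF. pose proof HF as HF'. unfold formula in HF'; simpl in HF'.
    apply andb_prop in HF' as [H0 H1]. split.
    - intros z [Hz H]. split; auto. intros g [Hg1 Hg2] Hsub. apply Hg2. split; auto.
      intros [x1 x2] Hx Hgx. apply H; auto. split. apply inS_l; auto. simpl.
      destruct (Hgx _ (Hsub true _ (m_self _ (inS_l _ H0)))) as [_ P0].
      destruct (Hgx _ (Hsub false _ (m_self _ (inS_l _ H1)))) as [_ P1]. simpl in P0, P1.
      apply p_orL with F0 F1; [inapp| |].
      + eapply weak; [exact P0|solve_incl|solve_incl].
      + eapply weak; [exact P1|solve_incl|solve_incl].
    - intros y [Hy H]. apply H. apply inB_M, inS_r; auto.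
      intros [|]; simpl; intros z [Hz Hp]; split; auto; simpl in *.
      + apply p_orR0 with F0 F1; [left; auto|]. eapply weak; [exact Hp|solve_incl|solve_incl].
      + apply p_orR1 with F0 F1; [left; auto|]. eapply weak; [exact Hp|solve_incl|solve_incl]. }
  split.
  {
    intros F0 F1 HF. pose proof HF as HF'. unfold formula in HF'; simpl in HF'.
    apply andb_prop in HF' as [H0 H1]. split.
    - intros z [Hz H]. split; auto. intros [|]; simpl; split; auto;
        intros [x1 x2] Hx [_ P]; apply H; auto; (split; [apply inS_l; auto|]); simpl in *.
      + apply p_andL0 with F0 F1; [inapp|]. eapply weak; [exact P|solve_incl|solve_incl].
      + apply p_andL1 with F0 F1; [inapp|]. eapply weak; [exact P|solve_incl|solve_incl].
    - intros y [Hy H]. split; auto. simpl.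
      destruct (H true) as [_ P0]. destruct (H false) as [_ P1]. simpl in P0, P1.
      apply p_andR with F0 F1; [left; auto| |].
      + eapply weak; [exact P0|solve_incl|solve_incl].
      + eapply weak; [exact P1|solve_incl|solve_incl]. }
  split.
  {
    intros F HF. assert (forall a, formula (open1 0 (TF a) F)) as Fo
      by (intros; apply formula_open1; auto). split.
    - intros z [Hz H]. split; auto. intros g [Hg1 Hg2] Hsub. apply Hg2. split; auto.
      intros [x1 x2] Hx Hgx. apply H; auto. split. apply inS_l; auto. simpl.
      destruct (fresh1_exists (x1 ++ [Ex1 F]) (x2 ++ [])) as [a Ha].
      destruct (Hgx _ (Hsub a _ (m_self _ (inS_l _ (Fo a))))) as [_ P]. simpl in P.
      apply p_ex1L with F a; [inapp|auto|]. eapply weak; [exact P|solve_incl|solve_incl].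
    - intros y [Hy H]. apply H. apply inB_M, inS_r; auto.
      intros a z [Hz P]. split; auto. simpl in *.
      apply p_ex1R with F a; [left; auto|]. eapply weak; [exact P|solve_incl|solve_incl]. }
  split.
  {
    intros F HF. assert (forall a, formula (open1 0 (TF a) F)) as Fo
      by (intros; apply formula_open1; auto). split.
    - intros z [Hz H]. split; auto. intros a. split; auto.
      intros [x1 x2] Hx [_ P]. apply H; auto. split. apply inS_l; auto. simpl in *.
      apply p_all1L with F a; [inapp|]. eapply weak; [exact P|solve_incl|solve_incl].
    - intros y [Hy H]. split; auto. simpl.
      destruct (fresh1_exists (fst y) (All1 F :: snd y)) as [a Ha].
      apply p_all1R with F a; [left; auto|auto|].
      destruct (H a) as [_ P]. simpl in P. eapply weak; [exact P|solve_incl|solve_incl]. }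
  split.
  {
    intros n F HF. assert (forall T, abstract n T -> formula (open2 0 T F)) as Fo
      by (intros; apply (formula_open2 n); auto).
    pose proof (formula_ok n F (or_introl HF)) as Hok. split.
    - intros z [Hz H]. split; auto. intros g [Hg1 Hg2] Hsub. apply Hg2. split; auto.
      intros [x1 x2] Hx Hgx. apply H; auto. split. apply inS_l; auto. simpl.
      destruct (fresh2_exists n (x1 ++ [Ex2 n F]) (x2 ++ [])) as [a Ha].
      destruct (Hgx _ (Hsub (exist _ (Tv a n) (abstract_Tv a n)) _
                   (m_self _ (inS_l _ (Fo _ (abstract_Tv a n)))))) as [_ P]. simpl in P.
      rewrite (open2_Tv a n F [n] 0) in P; auto.
      apply p_ex2L with n F a; [inapp|auto|]. eapply weak; [exact P|solve_incl|solve_incl].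
    - intros y [Hy H]. apply H. apply inB_M, inS_r; auto.
      intros [T HT] z [Hz P]. split; auto. simpl in *.
      apply p_ex2R with n F T; [left; auto|auto|]. eapply weak; [exact P|solve_incl|solve_incl]. }
  {
    intros n F HF. assert (forall T, abstract n T -> formula (open2 0 T F)) as Fo
      by (intros; apply (formula_open2 n); auto).
    pose proof (formula_ok n F (or_intror HF)) as Hok. split.
    - intros z [Hz H]. split; auto. intros [T HT]. split; auto.
      intros [x1 x2] Hx [_ P]. apply H; auto. split. apply inS_l; auto. simpl in *.
      apply p_all2L with n F T; [inapp|auto|]. eapply weak; [exact P|solve_incl|solve_incl].
    - intros y [Hy H]. split; auto. simpl.
      destruct (fresh2_exists n (fst y) (All2 n F :: snd y)) as [a Ha].
      apply p_all2R with n F a; [left; auto|auto|].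
      destruct (H (exist _ (Tv a n) (abstract_Tv a n))) as [_ P]. simpl in P.
      rewrite (open2_Tv a n F [n] 0) in P; auto.
      eapply weak; [exact P|solve_incl|solve_incl]. }
Qed.
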